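(* Let $t$ be a positive integer and $\lambda=\{k_1,\dots,k_q\}$ a multiset of positive integers. Suppose there are $K_t$-minor-free graphs $H_1$ and $H_2$, a clique $K=\{v_1,\dots,v_p\}$ in $H_1$, a $q$-tuple $\mathcal{C}=(C_1,\dots,C_q)$ of pairwise disjoint colour sets, and a $(\lambda,\mathcal{C})$-list assignment $L$ of $H_2$ such that: for every $L$-colouring $\psi$ of $H_2$, there is a $p$-clique $K_\psi=\{v_{\psi,1},\dots,v_{\psi,p}\}$ in $H_2$ such that there exists a $\psi|_{K_\psi}$-obstacle $L_\psi$ for $(H_1,K,\mathcal{C})$ (where $\psi|_{K_\psi}$ is regarded as a proper colouring of the $p$-clique $K_\psi$ with vertices ordered $v_{\psi,1},\dots,v_{\psi,p}$). Then there is a $K_t$-minor-free graph $G$ that is not $\lambda$-choosable.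
   Context: All graphs are finite and simple. A graph is $K_t$-minor-free if $K_t$ cannot be obtained from a subgraph of it by contracting edges. A list assignment $L$ of $G$ assigns to each vertex $v$ a set $L(v)$ of colours; an $L$-colouring is a proper colouring $f$ with $f(v)\in L(v)$ for all $v$. For a multiset $\lambda=\{k_1,\dots,k_q\}$ of positive integers, a $\lambda$-list assignment of $G$ is a list assignment $L$ such that $\bigcup_{v}L(v)$ can be partitioned into $q$ sets $C_1,\dots,C_q$ with $|L(v)\cap C_i|\ge k_i$ for all $i$ and $v$; $G$ is $\lambda$-choosable if it is $L$-colourable for every $\lambda$-list assignment $L$. Given a $q$-tuple $\mathcal{C}=(C_1,\dots,C_q)$ of disjoint colour sets, a $(\lambda,\mathcal{C})$-list assignment of a graph $G$ is a list assignment $L$ with $|L(v)\cap C_i|\ge k_i$ for every vertex $v$ and every $i$. If $K=\{v_1,\dots,v_p\}$ is a clique in $G$, $K'=\{v'_1,\dots,v'_p\}$ is a $p$-clique (disjoint from $G$) and $\psi'$ is a proper colouring of $K'$, then a $(\lambda,\mathcal{C})$-list assignment $L$ of $G$ is a $\psi'$-obstacle for $(G,K,\mathcal{C})$ if the colouring $\psi$ of $K$ given by $\psi(v_i)=\psi'(v'_i)$ is an $L$-colouring of $K$ that cannot be extended to a proper $L$-colouring of $G$. *)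

(* Defs.v *)
From mathcomp Require Import all_boot.
Set Implicit Arguments. Unset Strict Implicit. Unset Printing Implicit Defensive.

Definition simple_graph (V : finType) (e : rel V) : Prop :=
  (forall x y, e x y = e y x) /\ (forall x, ~~ e x x).

Definition connected_in (V : finType) (e : rel V) (B : {set V}) : Prop :=
  forall x y, x \in B -> y \in B ->
    connect [rel u v | [&& u \in B, v \in B & e u v]] x y.

(* G has a K_t minor: branch sets B_1..B_t, nonempty, connected, pairwise
   disjoint, pairwise joined by an edge (contract each B_i to a vertex). *)
Definition has_K_minor (V : finType) (e : rel V) (t : nat) : Prop :=
  exists B : 'I_t -> {set V},
    [/\ forall i, B i != set0,
        forall i, connected_in e (B i),
        forall i j, i != j -> [disjoint B i & B j] &
        forall i j, i != j -> exists x y, [/\ x \in B i, y \in B j & e x y]].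

Definition K_minor_free (V : finType) (e : rel V) (t : nat) : Prop :=
  ~ has_K_minor e t.

Definition proper_col (V Col : finType) (e : rel V) (f : V -> Col) : Prop :=
  forall x y, e x y -> f x != f y.

Definition L_colouring (V Col : finType) (e : rel V) (L : V -> {set Col})
  (f : V -> Col) : Prop :=
  proper_col e f /\ forall v, f v \in L v.

Definition is_clique (V : finType) (e : rel V) (p : nat) (K : 'I_p -> V) : Prop :=
  injective K /\ forall i j, i != j -> e (K i) (K j).

(* multiset lambda = {k_1,..,k_q} given by k : 'I_q -> nat *)
Definition lambdaC_assignment (V Col : finType) (q : nat) (k : 'I_q -> nat)
  (C : 'I_q -> {set Col}) (L : V -> {set Col}) : Prop :=
  forall v i, k i <= #|L v :&: C i|.

Definition lambda_assignment (V Col : finType) (q : nat) (k : 'I_q -> nat)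
  (L : V -> {set Col}) : Prop :=
  exists C : 'I_q -> {set Col},
    [/\ forall i j, i != j -> [disjoint C i & C j],
        \bigcup_i C i = \bigcup_v L v &
        lambdaC_assignment k C L].

Definition lambda_choosable (V : finType) (e : rel V) (q : nat)
  (k : 'I_q -> nat) : Prop :=
  forall (Col : finType) (L : V -> {set Col}),
    lambda_assignment k L -> exists f, L_colouring e L f.

(* psi'-obstacle for (G, K, C): psi' given by c : 'I_p -> Col (c i = psi'(v'_i)). *)
Definition obstacle (V Col : finType) (e : rel V) (p : nat) (K : 'I_p -> V)
  (q : nat) (k : 'I_q -> nat) (C : 'I_q -> {set Col})
  (c : 'I_p -> Col) (L : V -> {set Col}) : Prop :=
  [/\ lambdaC_assignment k C L,
      (forall i, c i \in L (K i)) /\ (forall i j, e (K i) (K j) -> c i != c j) &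
      ~ exists f, L_colouring e L f /\ forall i, f (K i) = c i].

(* Main.v *)
From Stdlib Require Import ClassicalEpsilon.
Require Import Defs.
From mathcomp Require Import all_boot.
Set Implicit Arguments. Unset Strict Implicit. Unset Printing Implicit Defensive.

Lemma proj_claim (V W : finType) (e : rel V) (eW : rel W) (g : W -> V) (A : V -> {set W})
  (esym : forall x y, e x y = e y x) (ginj : injective g)
  (eg : forall a b, e (g a) (g b) = eW a b)
  (Acl : forall y a b, y \notin codom g -> a \in A y -> b \in A y -> a != b -> eW a b)
  (Aeq : forall y z, y \notin codom g -> z \notin codom g -> e y z -> A y = A z)
  (Aat : forall y a, y \notin codom g -> e y (g a) -> a \in A y)
  (Bs : {set V}) (b : W) :
  g b \in Bs -> forall p w, w \in Bs ->
  path [rel u v | [&& u \in Bs, v \in Bs & e u v]] w p -> g b = last w p ->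
  (forall a, w = g a ->
     connect [rel u v | [&& u \in [set a | g a \in Bs], v \in [set a | g a \in Bs] & eW u v]] a b)
  /\ (w \notin codom g -> exists2 z, z \in A w &
     (g z \in Bs) /\ connect [rel u v | [&& u \in [set a | g a \in Bs], v \in [set a | g a \in Bs] & eW u v]] z b).
Proof.
set r := (SimplRel (fun u v : V => _)); set rW := (SimplRel (fun u v : W => _)).
move=> gb; elim=> [|w' p IH] w wB /=.
  move=> _ <-; split; first by move=> a /ginj ->.
  by move/negP; case; apply: codom_f.
case/andP=> /and3P [_ w'B eww'] pth lst.
have [IH1 IH2] := IH w' w'B pth lst.
have step : forall a a', g a \in Bs -> g a' \in Bs -> eW a a' -> connect rW a' b -> connect rW a b.
  move=> a a' h1 h2 h3 h4; apply: connect_trans h4; apply: connect1.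
  by rewrite /rW /= !inE h1 h2 h3.
split.
  move=> a wa; subst w.
  case: (boolP (w' \in codom g)) => [/codomP [a' wa']|nw'].
    subst w'; apply: step (IH1 a' erefl) => //; by rewrite -eg.
  have [z zA [zB zc]] := IH2 nw'.
  have aA : a \in A w' by apply: Aat; rewrite // esym.
  have [->|naz] := eqVneq a z; first by [].
  by apply: (step a z) => //; apply: (Acl w') naz.
move=> nw.
case: (boolP (w' \in codom g)) => [/codomP [a' wa']|nw'].
  subst w'; exists a'; first by apply: Aat.
  by split => //; apply: IH1.
by rewrite (Aeq _ _ nw nw' eww'); apply: IH2.
Qed.

Lemma proj_minor (V W : finType) (e : rel V) (eW : rel W) (t : nat) (g : W -> V) (A : V -> {set W})
  (esym : forall x y, e x y = e y x) (ginj : injective g)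
  (eg : forall a b, e (g a) (g b) = eW a b)
  (Acl : forall y a b, y \notin codom g -> a \in A y -> b \in A y -> a != b -> eW a b)
  (Aeq : forall y z, y \notin codom g -> z \notin codom g -> e y z -> A y = A z)
  (Aat : forall y a, y \notin codom g -> e y (g a) -> a \in A y)
  (B : 'I_t -> {set V}) :
  [/\ forall i, B i != set0, forall i, connected_in e (B i),
      forall i j, i != j -> [disjoint B i & B j] &
      forall i j, i != j -> exists x y, [/\ x \in B i, y \in B j & e x y]] ->
  (forall i, exists a, g a \in B i) -> has_K_minor eW t.
Proof.
case=> _ Bc Bd Ba Bm.
have cl := proj_claim esym ginj eg Acl Aeq Aat.
have att : forall i y, y \in B i -> y \notin codom g ->
    exists2 z, z \in A y & g z \in B i.
  move=> i y yB ny; have [b gb] := Bm i.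
  have /connectP [p pth lst] := Bc i y (g b) yB gb.
  have [_ H] := cl _ _ gb p y yB pth lst.
  by have [z zA [zB _]] := H ny; exists z.
have dis : forall i j a b, i != j -> g a \in B i -> g b \in B j -> a != b.
  move=> i j a b ij ha hb; apply/eqP => ab; subst b.
  by move: (Bd i j ij) => /disjointFr; move/(_ _ ha); rewrite hb.
exists (fun i => [set a | g a \in B i]); split.
- move=> i; have [a ha] := Bm i; apply/set0Pn; exists a; by rewrite inE.
- move=> i a b; rewrite !inE => ha hb.
  have /connectP [p pth lst] := Bc i (g a) (g b) ha hb.
  have [H _] := cl _ _ hb p (g a) ha pth lst.
  exact: H.
- move=> i j ij; rewrite disjoint_subset; apply/subsetP => a; rewrite !inE => ha.
  by apply/negP => hb; move: (Bd i j ij) => /disjointFr; move/(_ _ ha); rewrite hb.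
- move=> i j ij; have [x [y [xB yB exy]]] := Ba i j ij.
  case: (boolP (x \in codom g)) => [/codomP [a xa]|nx];
  case: (boolP (y \in codom g)) => [/codomP [b yb]|ny].
  + subst; exists a, b; by rewrite !inE -eg.
  + subst x; have [z zA zB] := att j y yB ny.
    exists a, z; rewrite !inE; split => //.
    apply: (Acl y) => //; first by apply: Aat; rewrite // esym.
    exact: (dis i j).
  + subst y; have [z zA zB] := att i x xB nx.
    exists z, b; rewrite !inE; split => //.
    apply: (Acl x) => //; first by apply: Aat.
    exact: (dis i j).
  + have [z1 z1A z1B] := att i x xB nx.
    have [z2 z2A z2B] := att j y yB ny.
    exists z1, z2; rewrite !inE; split => //.
    apply: (Acl x) => //; first by rewrite (Aeq _ _ nx ny exy).
    exact: (dis i j).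
Qed.

Section Constr.
Variables (Phi V1 V2 : finType) (e1 : rel V1) (e2 : rel V2) (p : nat)
  (K : 'I_p -> V1) (KK : Phi -> 'I_p -> V2).

Definition Iv : finType := {y : Phi * V1 | y.2 \notin codom K}.
Definition Gv : finType := (V2 + Iv)%type.

Definition Ge : rel Gv := fun u v => match u, v with
 | inl a, inl b => e2 a b
 | inr x, inr y => ((val x).1 == (val y).1) && e1 (val x).2 (val y).2
 | inr x, inl b => [exists i, (b == KK (val x).1 i) && e1 (val x).2 (K i)]
 | inl a, inr y => [exists i, (a == KK (val y).1 i) && e1 (val y).2 (K i)]
 end.

Lemma Kdec x : {i | K i = x} + {x \notin codom K}.
Proof.
case: (boolP (x \in codom K)) => h; last by right.
left; exists (iinv h); exact: f_iinv.
Qed.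

Definition Gg (phi : Phi) (x : V1) : Gv :=
  match Kdec x with
  | inleft (exist i _) => inl (KK phi i)
  | inright h => inr (exist (fun y : Phi * V1 => y.2 \notin codom K) (phi, x) h)
  end.

Hypothesis s1 : simple_graph e1.
Hypothesis s2 : simple_graph e2.
Hypothesis cK : is_clique e1 K.
Hypothesis cKK : forall phi, is_clique e2 (KK phi).

Lemma GgK phi i : Gg phi (K i) = inl (KK phi i).
Proof.
rewrite /Gg; case: (Kdec (K i)) => [[j /(proj1 cK) ->]|h] //.
by case/negP: h; apply: codom_f.
Qed.

Lemma GgN phi x (h : x \notin codom K) :
  Gg phi x = inr (exist (fun y : Phi * V1 => y.2 \notin codom K) (phi, x) h).
Proof.
rewrite /Gg; case: (Kdec x) => [[j Kj]|h']; first by subst x; case/negP: h; apply: codom_f.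
by congr inr; apply: val_inj.
Qed.

Lemma GgV (z : Iv) : Gg (val z).1 (val z).2 = inr z.
Proof. by rewrite (GgN _ (valP z)); congr inr; apply: val_inj => /=; case: (val z). Qed.

Lemma Ge_sym : forall x y, Ge x y = Ge y x.
Proof.
have [sy1 _] := s1; have [sy2 _] := s2.
case=> [a|x] [b|y] /=.
- exact: sy2.
- by [].
- by [].
- by rewrite eq_sym sy1.
Qed.

Lemma Ge_simple : simple_graph Ge.
Proof.
split; first exact: Ge_sym.
have [_ i1] := s1; have [_ i2] := s2.
case=> [a|x] /=; first exact: i2.
by rewrite eqxx /= i1.
Qed.

Lemma e1KK i j : e1 (K i) (K j) = (i != j).
Proof.
have [ij|ij] := eqVneq i j; first by subst; apply/negbTE; apply: (proj2 s1).
exact: (proj2 cK).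
Qed.

Lemma e2KK phi i j : e2 (KK phi i) (KK phi j) = (i != j).
Proof.
have [ij|ij] := eqVneq i j; first by subst; apply/negbTE; apply: (proj2 s2).
exact: (proj2 (cKK phi)).
Qed.

Lemma Gg_edge phi x y : Ge (Gg phi x) (Gg phi y) = e1 x y.
Proof.
case: (boolP (x \in codom K)) => [/codomP [i ->]|hx];
case: (boolP (y \in codom K)) => [/codomP [j ->]|hy].
- by rewrite !GgK /= e1KK e2KK.
- rewrite GgK (GgN _ hy) /=. apply/existsP/idP => [[l /andP [/eqP E h]]|h].
    move/(proj1 (cKK phi)): E => ->. by rewrite (proj1 s1).
  by exists i; rewrite eqxx /= (proj1 s1).
- rewrite GgK (GgN _ hx) /=. apply/existsP/idP => [[l /andP [/eqP E h]]|h].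
    by move/(proj1 (cKK phi)): E => ->.
  by exists j; rewrite eqxx /=.
- by rewrite (GgN _ hx) (GgN _ hy) /= eqxx.
Qed.

Lemma Gg_inj phi : injective (Gg phi).
Proof.
move=> x y.
case: (boolP (x \in codom K)) => [/codomP [i ->]|hx];
case: (boolP (y \in codom K)) => [/codomP [j ->]|hy].
- by rewrite !GgK => [[/(proj1 (cKK phi)) ->]].
- by rewrite GgK (GgN _ hy).
- by rewrite GgK (GgN _ hx).
- by rewrite (GgN _ hx) (GgN _ hy) => [[]].
Qed.

End Constr.

Theorem lemma2 (t : nat) (q : nat) (k : 'I_q -> nat) (Col : finType)
  (V1 : finType) (e1 : rel V1) (V2 : finType) (e2 : rel V2)
  (p : nat) (K : 'I_p -> V1) (C : 'I_q -> {set Col}) (L : V2 -> {set Col}) :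
  0 < t ->
  (forall i, 0 < k i) ->
  simple_graph e1 -> K_minor_free e1 t ->
  simple_graph e2 -> K_minor_free e2 t ->
  is_clique e1 K ->
  (forall i j, i != j -> [disjoint C i & C j]) ->
  lambdaC_assignment k C L ->
  (forall psi : V2 -> Col, L_colouring e2 L psi ->
     exists Kpsi : 'I_p -> V2, is_clique e2 Kpsi /\
       exists Lpsi : V1 -> {set Col},
         obstacle e1 K k C (fun i => psi (Kpsi i)) Lpsi) ->
  exists (V : finType) (e : rel V),
    [/\ simple_graph e, K_minor_free e t & ~ lambda_choosable e k].
Proof.
move=> t0 kpos s1 mf1 s2 mf2 cK Cd LC H.
pose decP (P : Prop) : bool := if excluded_middle_informative P then true else false.
have decPE : forall P, decP P -> P.
  by move=> P; rewrite /decP; case: excluded_middle_informative.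
have decPI : forall P, P -> decP P.
  by move=> P h; rewrite /decP; case: excluded_middle_informative.
pose Phi : finType := {f : {ffun V2 -> Col} | decP (L_colouring e2 L f)}.
have HK : forall phi : Phi, exists pr : ('I_p -> V2) * (V1 -> {set Col}),
    is_clique e2 pr.1 /\ obstacle e1 K k C (fun i => val phi (pr.1 i)) pr.2.
  move=> phi; have [Kp [cKp [Lp ob]]] := H _ (decPE _ (valP phi)).
  by exists (Kp, Lp).
pose pr := fun phi => proj1_sig (constructive_indefinite_description _ (HK phi)).
have prP : forall phi, is_clique e2 (pr phi).1 /\
    obstacle e1 K k C (fun i => val phi ((pr phi).1 i)) (pr phi).2.
  move=> phi; exact: (proj2_sig (constructive_indefinite_description _ (HK phi))).
pose KK := fun phi => (pr phi).1.
pose LL := fun phi => (pr phi).2.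
have cKK : forall phi, is_clique e2 (KK phi) := fun phi => (prP phi).1.
exists (Gv Phi V2 K), (Ge e1 e2 KK); split.
- exact: Ge_simple.
- move=> [B HB]; have [Bn Bc Bd Ba] := HB.
  have esym := Ge_sym (K:=K) KK s1 s2.
  case: (boolP [forall i, [exists a, inl a \in B i]]) => [/forallP all | /forallPn [i0 /existsPn nI]].
  + apply: mf2.
    apply: (@proj_minor (Gv Phi V2 K) V2 _ e2 t (fun a => inl a) (fun y => match y with inl _ => set0 | inr z => [set KK (val z).1 i | i in 'I_p] end) esym _ _ _ _ _ B HB).
    * by move=> a b [].
    * by [].
    * case=> [a|z] a' b'; first by rewrite codom_f.
      move=> _ /imsetP [i _ ->] /imsetP [j _ ->] ne.
      apply: (proj2 (cKK _)); apply: contraNneq ne => ->; done.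
    * case=> [a|z]; first by rewrite codom_f.
      case=> [b|z']; first by rewrite codom_f.
      by move=> _ _ /= /andP [/eqP ->].
    * case=> [a|z] b; first by rewrite codom_f.
      move=> _ /= /existsP [i /andP [/eqP -> _]].
      by apply: imset_f.
    * by move=> i; have /existsP [a h] := all i; exists a.
  + have [w wB] := set0Pn _ (Bn i0).
    case: w wB => [a|z0] wB; first by move: (nI a); rewrite wB.
    pose phi := (val z0).1.
    pose P : pred (Gv Phi V2 K) := fun v => if v is inr z then (val z).1 == phi else false.
    have allP : forall v, v \in B i0 -> P v.
      have clP : closed [rel u v | [&& u \in B i0, v \in B i0 & Ge e1 e2 KK u v]] P.
        move=> x y /= /and3P [xB yB exy].
        case: x xB exy => [b|x] xB exy; first by move: (nI b); rewrite xB.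
        case: y yB exy => [b|y] yB exy; first by move: (nI b); rewrite yB.
        by case/andP: exy => /eqP E _; rewrite !unfold_in /= E.
      move=> v vB; have := closed_connect clP (Bc i0 _ _ wB vB).
      by rewrite !unfold_in /= eqxx.
    apply: mf1.
    have ginj : injective (Gg K KK phi) := @Gg_inj _ _ _ _ _ _ _ _ cK cKK phi.
    have gedge := Gg_edge s1 s2 cK cKK phi.
    apply: (@proj_minor (Gv Phi V2 K) V1 _ e1 t (Gg K KK phi) (fun _ => [set K i | i in 'I_p]) esym ginj gedge _ _ _ B HB).
    * move=> _ a b _ /imsetP [i _ ->] /imsetP [j _ ->] ne.
      apply: (proj2 cK); apply: contraNneq ne => ->; done.
    * by [].
    * move=> y a ny ey.
      case: (boolP (a \in codom K)) => [/codomP [i ->]|na]; first by apply: imset_f.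
      exfalso; move: ey; rewrite (GgN _ _ na).
      case: y ny => [b|z] ny /=.
        case/existsP => i /andP [/eqP bE _].
        by move/negP: ny; apply; apply/codomP; exists (K i); rewrite (GgK KK cK) bE.
      case/andP => /eqP zE _.
      by move/negP: ny; apply; apply/codomP; exists (val z).2; rewrite -(GgV KK z) zE.
    * move=> j; have [->|ne] := eqVneq j i0.
        by exists (val z0).2; rewrite (GgV KK z0).
      have [u [v [uB vB euv]]] := Ba i0 j ltac:(by rewrite eq_sym).
      have := allP u uB; case: u uB euv => [b|z] uB euv //= /eqP zE.
      case: v vB euv => [b|z'] vB /=.
        case/existsP => i /andP [/eqP bE _].
        by exists (K i); rewrite (GgK KK cK) -zE -bE.
      case/andP => /eqP z'E _.
      by exists (val z').2; rewrite -zE z'E (GgV KK z').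
- move=> ch.
  pose U := \bigcup_i C i.
  pose L0 : Gv Phi V2 K -> {set Col} := fun v => match v with inl a => L a | inr z => LL (val z).1 (val z).2 end.
  pose L' := fun v => L0 v :&: U.
  pose W := \bigcup_v L' v.
  pose C' := fun i => C i :&: W.
  have k0 : forall v i, k i <= #|L0 v :&: C i|.
    case=> [a|z] i /=; first exact: LC.
    by have [_ [lc _ _]] := prP (val z).1; apply: lc.
  have la : lambda_assignment k L'.
    exists C'; split.
    + move=> i j ij; apply: disjointW (Cd i j ij); apply/subsetP => c; rewrite inE => /andP [] //.
    + apply/setP => c; apply/bigcupP/idP => [[i _]|cW]; first by rewrite inE => /andP [].
      have /bigcupP [v _] := cW; rewrite inE => /andP [_ /bigcupP [i _ ci]].
      by exists i => //; rewrite inE ci cW.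
    + move=> v i; apply: leq_trans (k0 v i) _; apply: subset_leq_card.
      apply/subsetP => c; rewrite !inE => /andP [c0 ci].
      have cU : c \in U by apply/bigcupP; exists i.
      have cL : c \in L' v by rewrite inE c0 cU.
      by rewrite c0 cU ci /=; apply/bigcupP; exists v.
  have [f [fp fL]] := ch Col L' la.
  pose psi := [ffun a => f (inl a)].
  have hpsi : L_colouring e2 L psi.
    split.
    + move=> a b eab; rewrite !ffunE; exact: fp.
    + by move=> a; rewrite ffunE; have := fL (inl a); rewrite inE => /andP [].
  pose phi : Phi := exist _ psi (decPI _ hpsi).
  have [_ [_ [cin _] noext]] := prP phi.
  apply: noext; exists (fun x => f (Gg K KK phi x)); split; last first.
    by move=> i; rewrite (GgK KK cK) /= ffunE.
  split.
  + move=> x y exy; apply: fp; by rewrite (Gg_edge s1 s2 cK cKK).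
  + move=> x; case: (boolP (x \in codom K)) => [/codomP [i ->]|nx].
      by rewrite (GgK KK cK); have := cin i; rewrite /= ffunE.
    by rewrite (GgN _ _ nx); have := fL (inr (exist _ (phi, x) nx)); rewrite inE => /andP [].
Qed.
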